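(* Let $n$ and $r$ be positive integers satisfying $\frac{r^2+r}{2}>n\geq r^{3/2}+\frac{r}{2}+1$. Then $$b(\mathrm{S}_{n,r})=\left\lceil\left(3\left(2n+r-\frac{5}{4}\right)+r^2\right)^{1/2}-r-\frac{3}{2}\right\rceil.$$
   Context: $\mathrm{S}_{n,r}$ denotes the symmetric group $\mathrm{S}_n$ acting naturally on the set of $r$-element subsets of $[n]=\{1,\dots,n\}$. For a permutation group $G$ on a set $\Omega$, $b(G)$ is the minimum size of a subset of $\Omega$ whose pointwise stabiliser in $G$ is trivial. *)

(* Defs.v *)
From HB Require Import structures.
From mathcomp Require Import all_boot all_order all_algebra all_fingroup.
From mathcomp Require Import reals.
Set Implicit Arguments. Unset Strict Implicit. Unset Printing Implicit Defensive.

(* S_{n,r}: Sym('I_n) acting on r-subsets of 'I_n (= [n]) by g . A = g @: A.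
   A base is a set B of r-subsets whose pointwise stabiliser is trivial. *)
Definition is_base (n r : nat) (B : {set {set 'I_n}}) : bool :=
  [forall A in B, #|A| == r] &&
  [forall g : {perm 'I_n}, [forall A in B, (g @: A) == A] ==> (g == 1%g)].

(* b(S_{n,r}) : minimum size of a base (default #|{set {set 'I_n}}| if none,
   which never happens under the theorem's hypotheses). *)
Definition base_size (n r : nat) : nat :=
  \big[minn/#|{set {set 'I_n}}|]_(B : {set {set 'I_n}} | @is_base n r B) #|B|.

(* Main.v *)
Require Import Defs.
From HB Require Import structures.
From mathcomp Require Import all_boot all_order all_algebra all_fingroup.
From mathcomp Require Import reals.
From mathcomp Require Import zify ring lra.
Import Order.TTheory GRing.Theory Num.Theory.

Section Comb.
Variable T : finType.

Definition deg (F : {set {set T}}) (k : T) : nat := \sum_(X in F) (k \in X).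

Lemma sum_mem (X : {set T}) : \sum_k (k \in X : nat) = #|X|.
Proof. rewrite -sum1_card [RHS]big_mkcond /=; apply: eq_bigr => k _; by case: (k \in X). Qed.

Lemma deg_card (F : {set {set T}}) k : deg F k = #|[set X in F | k \in X]|.
Proof.
rewrite /deg -sum1_card [RHS]big_mkcond /= [LHS]big_mkcond /=.
by apply: eq_bigr => X _; rewrite inE; case: (X \in F); case: (k \in X).
Qed.

Lemma sum_deg (F : {set {set T}}) : \sum_k deg F k = \sum_(X in F) #|X|.
Proof.
rewrite /deg exchange_big /=; apply: eq_bigr => X _; exact: sum_mem.
Qed.

Lemma deg_swap (F : {set {set T}}) (S S' : {set T}) (k : T) : S \in F -> S' \notin F ->
  deg (S' |: (F :\ S)) k + (k \in S) = deg F k + (k \in S').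
Proof.
move=> SF S'F; rewrite /deg big_setU1 /=; last by rewrite !inE negb_and S'F orbT.
rewrite (bigD1 S SF) /=.
have -> : \sum_(X in F :\ S) (k \in X : nat) = \sum_(X in F | X != S) (k \in X : nat).
  by apply: eq_bigl => X; rewrite !inE andbC.
have E : forall a b c : nat, a + b + c = c + b + a by lia. exact: E.
Qed.

Lemma exists_swap (F : {set {set T}}) (i j : T) : deg F j < deg F i ->
  exists S, [/\ S \in F, i \in S, j \notin S & (j |: (S :\ i)) \notin F].
Proof.
move=> lt.
suff : [exists S, [&& S \in F, i \in S, j \notin S & (j |: (S :\ i)) \notin F]].
  by case/existsP => S /and4P[? ? ? ?]; exists S.
apply: contraT => /existsPn H.
set A := [set S in F | (i \in S) && (j \notin S)].
set A' := [set S in F | (j \in S) && (i \notin S)].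
set g := fun S : {set T} => j |: (S :\ i).
have injg : {in A &, injective g}.
  move=> S1 S2; rewrite !inE => /and3P[_ i1 j1] /and3P[_ i2 j2] e.
  apply/setP => x; have := congr1 (fun Y : {set T} => x \in Y) e; rewrite /g !inE.
  case: (eqVneq x i) => [->|xi]; first by rewrite i1 i2.
  case: (eqVneq x j) => [->|xj] //=; by rewrite (negPf j1) (negPf j2).
have sub : g @: A \subset A'.
  apply/subsetP => Y /imsetP[S]; rewrite inE => /and3P[SF iS jS] ->.
  have := H S; rewrite SF iS jS /= negbK => gF.
  rewrite !inE gF eqxx /= eqxx /= orbF; apply: contraNN jS => /eqP <-; exact: iS.
have cA := card_in_imset injg.
have le := subset_leq_card sub.
have di : deg F i = #|A| + \sum_(X in F) ((i \in X) && (j \in X) : nat).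
  rewrite /deg -sum1_card [X in X = _]big_mkcond [X in _ = X + _]big_mkcond [X in _ = _ + X]big_mkcond -big_split /=; apply: eq_bigr => X _.
  by rewrite !inE; case: (X \in F); case: (i \in X); case: (j \in X).
have dj : deg F j = #|A'| + \sum_(X in F) ((i \in X) && (j \in X) : nat).
  rewrite /deg -sum1_card [X in X = _]big_mkcond [X in _ = X + _]big_mkcond [X in _ = _ + X]big_mkcond -big_split /=; apply: eq_bigr => X _.
  by rewrite !inE; case: (X \in F); case: (i \in X); case: (j \in X).
have AA : #|A| <= #|A'| by rewrite -cA. lia.
Qed.

Lemma balance_base (r : nat) (F : {set {set T}}) :
  \sum_k deg F k = #|T| * r -> \sum_k (deg F k - r) = 0 -> forall k, deg F k = r.
Proof.
move=> Hs /eqP; rewrite sum_nat_eq0 => /forallP H0.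
have le k : deg F k <= r by have := H0 k; rewrite /= subn_eq0.
have : \sum_k (r - deg F k) = 0.
  have cT : #|@predT T| = #|T| by apply: eq_card.
  by rewrite sumnB // sum_nat_const cT Hs subnn.
move/eqP; rewrite sum_nat_eq0 => /forallP H1 k.
have := H1 k; have := le k; rewrite /= subn_eq0; lia.
Qed.

Lemma balance (r : nat) (F : {set {set T}}) :
  \sum_k deg F k = #|T| * r ->
  exists F' : {set {set T}}, #|F'| = #|F| /\ forall k, deg F' k = r.
Proof.
move: {2}(\sum_k (deg F k - r)) (leqnn (\sum_k (deg F k - r))) => m.
elim: m F => [|m IH] F Hm Hs.
  exists F; split => //; apply: balance_base => //; lia.
have [H0|Hpos] := eqVneq (\sum_k (deg F k - r)) 0.
  by exists F; split => //; apply: balance_base.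
have [i Hi] : exists i, r < deg F i.
  move: Hpos; rewrite sum_nat_eq0 => /forallPn[i]; rewrite /= subn_eq0 -ltnNge => ?.
  by exists i.
have [j Hj] : exists j, deg F j < r.
  apply/existsP; apply: contraT => /existsPn Hn.
  have Hge k : r <= deg F k by have := Hn k; rewrite -leqNgt.
  have : \sum_k deg F k = \sum_(k : T) r + \sum_k (deg F k - r).
    transitivity (\sum_(k : T) (r + (deg F k - r))); last by rewrite big_split.
    by apply: eq_bigr => k _; rewrite subnKC.
  have cT : #|@predT T| = #|T| by apply: eq_card.
  rewrite sum_nat_const cT Hs; move: Hpos; rewrite -lt0n; lia.
have [S [SF iS jS S'F]] := exists_swap F i j (ltn_trans Hj Hi).
set S' := j |: (S :\ i) in S'F.
set F' := S' |: (F :\ S).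
have ds k : deg F' k + (k \in S) = deg F k + (k \in S') := deg_swap F S S' k SF S'F.
have ij : i != j by apply: contraTneq Hi => ->; rewrite -leqNgt ltnW.
have iS' : i \notin S' by rewrite !inE eqxx /= orbF.
have jS' : j \in S' by rewrite !inE eqxx.
have kS k : k != i -> k != j -> (k \in S') = (k \in S).
  by move=> ki kj; rewrite !inE (negPf kj) ki.
have cF : #|F'| = #|F|.
  rewrite cardsU1 (cardsD1 S F) SF !inE (negPf S'F) andbF //=.
have cS : #|S'| = #|S|.
  by rewrite cardsU1 (cardsD1 i S) iS !inE (negPf jS) andbF.
have Hs' : \sum_k deg F' k = #|T| * r.
  have E : \sum_k (deg F' k + (k \in S : nat)) = \sum_k (deg F k + (k \in S' : nat)) by apply: eq_bigr => k _; exact: ds k.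
  move: E; rewrite !big_split /= !sum_mem cS Hs; by move/eqP; rewrite eqn_add2r => /eqP.
have Hm' : \sum_k (deg F' k - r) <= m.
  have lt : \sum_k (deg F' k - r) < \sum_k (deg F k - r).
    rewrite [X in X < _](bigD1 i) // [X in _ < X](bigD1 i) //=.
    have := ds i; rewrite iS (negPf iS') => dsi.
    have : \sum_(k | k != i) (deg F' k - r) <= \sum_(k | k != i) (deg F k - r).
      apply: leq_sum => k ki; case: (eqVneq k j) => [->|kj].
        have := ds j; rewrite (negPf jS) jS'; lia.
      have := ds k; rewrite (kS k ki kj); lia.
    lia.
  lia.
have [F'' [c'' d'']] := IH F' Hm' Hs'.
by exists F''; rewrite c'' cF.
Qed.
End Comb.
Arguments deg {T} F k.
Arguments balance {T} r F.
Arguments sum_deg {T} F.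
Arguments sum_mem {T} X.
Lemma base_of_family (T : finType) (r : nat) (F : {set {set T}}) :
  (forall k, deg F k = r) ->
  exists B : {set {set 'I_#|F|}}, is_base r B /\ #|B| <= #|T|.
Proof.
move=> Hd.
pose v (i : 'I_#|F|) : {set T} := enum_val i.
pose Bk (k : T) := [set i : 'I_#|F| | k \in v i].
have cB k : #|Bk k| = r.
  rewrite -(Hd k) /deg big_enum_val -sum1_card [LHS]big_mkcond /=.
  by apply: eq_bigr => i _; rewrite inE; case: (k \in _).
exists [set Bk k | k : T]; split; last exact: leq_imset_card.
apply/andP; split.
  by apply/forall_inP => A /imsetP[k _ ->]; rewrite cB.
apply/forallP => g; apply/implyP => /forall_inP H.
apply/eqP/permP => i; rewrite perm1; apply: enum_val_inj; apply/setP => k.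
have /eqP E := H (Bk k) (imset_f _ (isT : k \in T)).
have : (g i \in g @: Bk k) = (i \in Bk k) by rewrite mem_imset //; exact: perm_inj.
by rewrite E !inE.
Qed.

Lemma sub_card (T : finType) (A : {set T}) p : p <= #|A| ->
  exists P : {set T}, P \subset A /\ #|P| = p.
Proof.
move/card_geqP => [s [us ss sA]].
exists [set x in s]; split.
  by apply/subsetP => x; rewrite inE => /sA.
rewrite -ss -(card_uniqP us); apply: eq_card => x; by rewrite inE.
Qed.

Lemma sum_size (b k : nat) :
  \sum_(X : {set 'I_b}) (#|X| == k : nat) = 'C(b, k).
Proof.
have := card_draws 'I_b k; rewrite card_ord => <-.
rewrite -sum_mem; apply: eq_bigr => X _; by rewrite inE.
Qed.

Lemma construct_family (b p t : nat) : p <= 'C(b,2) -> t <= 'C(b,3) ->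
  exists F0 : {set {set 'I_b}},
    #|F0| = 1 + b + p + t /\ \sum_(X in F0) #|X| = b + 2 * p + 3 * t.
Proof.
move=> hp ht.
have hp' : p <= #|[set X : {set 'I_b} | #|X| == 2]| by rewrite card_draws card_ord.
have ht' : t <= #|[set X : {set 'I_b} | #|X| == 3]| by rewrite card_draws card_ord.
have [P [sP cP]] := sub_card _ _ _ hp'.
have [Tr [sT cT]] := sub_card _ _ _ ht'.
exists [set X : {set 'I_b} | (#|X| <= 1) || (X \in P) || (X \in Tr)].
have hP X : X \in P -> #|X| = 2.
  by move=> XP; have := subsetP sP X XP; rewrite inE => /eqP.
have hT X : X \in Tr -> #|X| = 3.
  by move=> XP; have := subsetP sT X XP; rewrite inE => /eqP.
split.
  rewrite -sum_mem.
  transitivity (\sum_(X : {set 'I_b}) ((#|X| == 0 : nat) + (#|X| == 1 : nat)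
       + (X \in P : nat) + (X \in Tr : nat))).
    apply: eq_bigr => X _; rewrite inE.
    move: (hP X) (hT X); case: (X \in P); case: (X \in Tr) => /=;
    move: #|X| => [|[|[|[|c]]]] h1 h2 //=;
    try (by have := h1 isT); by have := h2 isT.
  by rewrite !big_split /= !sum_size !sum_mem cP cT bin0 bin1.
rewrite big_mkcond /=.
transitivity (\sum_(X : {set 'I_b}) ((#|X| == 1 : nat)
     + 2 * (X \in P : nat) + 3 * (X \in Tr : nat))).
  apply: eq_bigr => X _; rewrite inE.
  move: (hP X) (hT X); case: (X \in P); case: (X \in Tr) => /=;
  move: #|X| => [|[|[|[|c]]]] h1 h2 //=;
  try (by have := h1 isT); by have := h2 isT.
rewrite !big_split /= sum_size !sum_mem cP cT bin1 sum_nat_const muln0; lia.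
Qed.

Lemma upper (n r b p t : nat) : p <= 'C(b,2) -> t <= 'C(b,3) ->
  1 + b + p + t = n -> b + 2 * p + 3 * t = b * r ->
  exists B : {set {set 'I_n}}, is_base r B /\ #|B| <= b.
Proof.
move=> hp ht hn hw.
have [F0 [c0 w0]] := construct_family _ _ _ hp ht.
have hs : \sum_k deg F0 k = #|'I_b| * r by rewrite sum_deg w0 hw card_ord.
have [F [cF dF]] := balance r F0 hs.
have := base_of_family _ _ _ dF.
have e : #|F| = n by rewrite cF c0.
rewrite e card_ord; exact.
Qed.

Lemma bin2E k : 2 * 'C(k, 2) = k * k.-1.
Proof.
elim: k => // k IH; rewrite binS bin1 mulnDr IH /=; case: k {IH} => //= k; lia.
Qed.

Lemma lower (n r : nat) (B : {set {set 'I_n}}) : is_base r B ->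
  6 * n <= #|B| ^ 2 + (2 * r + 3) * #|B| + 6.
Proof.
case/andP => /forall_inP Hr /forallP Hg.
pose sg (i : 'I_n) := [set A in B | i \in A].
have injs : injective sg.
  move=> i j e; apply/eqP; apply: contraT => ij.
  have := Hg (tperm i j); rewrite (_ : (tperm i j == 1%g) = false).
    rewrite implybF => /negP; case; apply/forall_inP => A AB.
    have eA : (i \in A) = (j \in A).
      by have := congr1 (fun S : {set {set 'I_n}} => A \in S) e; rewrite /sg !inE AB.
    rewrite eqEcard card_imset ?leqnn ?andbT; last exact: perm_inj.
    apply/subsetP => y /imsetP[x xA ->].
    by case: tpermP => [ei|ej|_ _] //; [rewrite -eA -ei | rewrite eA -ej].
  apply/negbTE; apply: contra ij => /eqP E.
  by have := congr1 (fun p : {perm 'I_n} => p i) E; rewrite tpermL perm1 => ->.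
have hsum : \sum_i #|sg i| = #|B| * r.
  transitivity (\sum_i deg B i).
    by apply: eq_bigr => i _; rewrite deg_card.
  rewrite sum_deg -sum1_card big_distrl /= mul1n.
  by apply: eq_bigr => A AB; apply/eqP; exact: Hr.
have cnt k : \sum_i (#|sg i| == k : nat) <= 'C(#|B|, k).
  rewrite -cards_draws.
  have -> : \sum_i (#|sg i| == k : nat) = #|[set i | #|sg i| == k]|.
    by rewrite -sum_mem; apply: eq_bigr => i _; rewrite inE.
  rewrite -(card_imset _ injs); apply: subset_leq_card.
  apply/subsetP => S /imsetP[i]; rewrite inE => /eqP ci ->.
  rewrite inE ci eqxx andbT; apply/subsetP => A; by rewrite inE => /andP[].
have pt i : 3 <= #|sg i| + 3 * (#|sg i| == 0) + 2 * (#|sg i| == 1) + (#|sg i| == 2).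
  by move: #|sg i| => [|[|[|c]]].
have : \sum_(i : 'I_n) 3 <= \sum_i (#|sg i| + 3 * (#|sg i| == 0) + 2 * (#|sg i| == 1) + (#|sg i| == 2)).
  by apply: leq_sum => i _; exact: pt.
rewrite !big_split /= !sum_nat_const card_ord hsum.
have := cnt 0; have := cnt 1; have := cnt 2; rewrite bin0 bin1.
have := bin2E #|B|.
case: #|B| => [|k] /=; nia.
Qed.

Lemma bin3E k : 6 * 'C(k, 3) = k * k.-1 * k.-2.
Proof.
elim: k => // k IH; rewrite binS mulnDr IH.
have := bin2E k; case: k {IH} => [|[|k]] //= e; nia.
Qed.

Local Open Scope ring_scope.

Lemma Rb (R : realFieldType) (n r b s : R) : 0 <= s -> s ^+ 2 = r -> 4 <= r -> 1 <= b -> b <= r ->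
  r * s + r / 2 + 1 <= n -> (b - 1) ^+ 2 + (2 * r + 3) * (b - 1) + 6 < 6 * n ->
  b * r + 2 * b + 3 <= 3 * n.
Proof.
move=> s0 sr r4 b1 br H2 H3.
have [c2|c2] := lerP (b - 1) (2 * s).
  have h1 : 0 <= (2 * s + 1 - b) * (2 * r + 4) by apply: mulr_ge0; lra.
  have h2 : 0 <= (2 * s + 1) * (r - 4) by apply: mulr_ge0; lra.
  nra.
have h1 : 0 < (b - 1 - 2 * s) * (b - 1 + 2 * s) by apply: mulr_gt0; lra.
nra.
Qed.

Lemma Rd (R : realFieldType) (n r b s : R) : 0 <= s -> s ^+ 2 = r -> 5 <= b ->
  r * s + r / 2 + 1 <= n ->
  6 * (b * r + b + 2 - 2 * n) <= b * (b - 1) * (b - 2).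
Proof.
move=> s0 sr b5 H2.
have h1 : 0 <= (b - 1 - 3 * s) ^+ 2 * (b - 1 + 6 * s).
  apply: mulr_ge0; [exact: sqr_ge0 | lra].
have e : (b - 1 - 3 * s) ^+ 2 * (b - 1 + 6 * s) = (b - 1) ^+ 3 - 27 * (s ^+ 2 * (b - 1 - 2 * s)) by ring.
have h3 : 0 <= (b - 5) * (b - 1) ^+ 2 by apply: mulr_ge0; [lra | exact: sqr_ge0].
have h4 : 6 * (b * r + b + 2 - 2 * n) <= 6 * (s ^+ 2 * (b - 1 - 2 * s)) + 6 * b.
  rewrite sr; nra.
have e2 : b * (b - 1) * (b - 2) = (b - 1) ^+ 3 - (b - 1) by ring.
nra.
Qed.

Lemma Rb5 (R : realFieldType) (n r b s : R) : 0 <= s -> s ^+ 2 = r -> 6 <= r ->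
  r * s + r / 2 + 1 <= n -> 6 * n <= b ^+ 2 + (2 * r + 3) * b + 6 -> 0 <= b -> b <= 4 -> False.
Proof.
move=> s0 sr r6 H2 H3 b0 b4.
have s24 : 12 / 5 <= s by nra.
have h1 : 0 <= (4 - b) * (2 * r + 3) by apply: mulr_ge0; lra.
have h2 : 0 <= (4 - b) * (4 + b) by apply: mulr_ge0; lra.
have h3 : 0 <= (s - 12/5) * r by apply: mulr_ge0; lra.
nra.
Qed.

Lemma Rr (R : realFieldType) (n r s : R) : 0 <= s -> s ^+ 2 = r -> 1 <= r -> r <= 5 ->
  r * s + r / 2 + 1 <= n -> 2 * n + 2 <= r ^+ 2 + r -> False.
Proof.
move=> s0 sr r1 r5 H2 H3.
nra.
Qed.

Lemma ceil_b (R : realType) (n r c : nat) :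
  (6 * n <= c.+1 ^ 2 + (2 * r + 3) * c.+1 + 6)%N ->
  (c ^ 2 + (2 * r + 3) * c + 6 < 6 * n)%N ->
  Num.ceil (Num.sqrt (3 * (2 * n%:R + r%:R - 5 / 4) + (r%:R : R) ^+ 2) - r%:R - 3 / 2)
   = (c.+1)%:Z.
Proof.
rewrite -(ler_nat R) -(ltr_nat R) !(natrD, natrM) => H1 H2.
apply: ceil_def; rewrite intrB.
have -> : ((c.+1)%:Z)%:~R = (c.+1)%:R :> R by [].
rewrite -natr1 addrK.
set D := 3 * _ + _.
have c0 : (0 : R) <= c%:R by [].
have r0 : (0 : R) <= r%:R by [].
have n0 : (0 : R) <= n%:R by [].
have D0 : 0 <= D by rewrite /D; nra.
have y0 := sqrtr_ge0 D; have yD := sqr_sqrtr D0.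
set y := Num.sqrt D in y0 yD *.
rewrite -?natr1 in H1.
apply/andP; split.
  have hz : (c%:R + r%:R + 3/2) ^+ 2 < y ^+ 2 by rewrite yD /D; nra.
  suff : c%:R + r%:R + 3/2 < y by lra.
  rewrite ltNge; apply/negP => h.
  have : 0 <= (c%:R + r%:R + 3/2 - y) * (c%:R + r%:R + 3/2 + y) by apply: mulr_ge0; lra.
  nra.
have hz : y ^+ 2 <= (c%:R + 1 + r%:R + 3/2) ^+ 2 by rewrite yD /D; nra.
suff : y <= c%:R + 1 + r%:R + 3/2 by lra.
rewrite leNgt; apply/negP => h.
have : 0 < (y - (c%:R + 1 + r%:R + 3/2)) * (y + (c%:R + 1 + r%:R + 3/2)) by apply: mulr_gt0; lra.
nra.
Qed.
Lemma bigmin_le (I : eqType) (s : seq I) (P : pred I) (F : I -> nat) x0 i0 :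
  i0 \in s -> P i0 -> (\big[minn/x0]_(i <- s | P i) F i <= F i0)%N.
Proof.
elim: s => // a s IH; rewrite inE big_cons => /orP[/eqP <- -> | ins Pi].
  exact: geq_minl.
case: (P a); last exact: IH.
exact: leq_trans (geq_minr _ _) (IH ins Pi).
Qed.

Theorem corollary3p4 (R : realType) (n r : nat) :
  (0 < n)%N -> (0 < r)%N ->
  n%:R < ((r%:R : R) ^+ 2 + r%:R) / 2 ->
  (r%:R : R) * Num.sqrt (r%:R) + r%:R / 2 + 1 <= n%:R ->
  (base_size n r)%:Z =
    Num.ceil (Num.sqrt (3 * (2 * n%:R + r%:R - 5 / 4) + (r%:R : R) ^+ 2)
              - r%:R - 3 / 2).
Proof.
move=> n0 r0 H1 H2.
have s0 := sqrtr_ge0 (r%:R : R).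
have sr : Num.sqrt (r%:R : R) ^+ 2 = r%:R by apply: sqr_sqrtr.
set s := Num.sqrt (r%:R : R) in s0 sr H2.
have h1 : (2 * n < r * r + r)%N.
  rewrite -(ltr_nat R) !(natrD, natrM); rewrite expr2 in H1; lra.
have r6 : (6 <= r)%N.
  rewrite leqNgt; apply/negP => r5.
  have h2 : (2 * n + 2 <= r * r + r)%N.
    by move: h1 r5; case: (r) => [|[|[|[|[|[|r']]]]]] //=; lia.
  apply: (@Rr R n%:R r%:R s) => //.
  - by rewrite ler1n.
  - by rewrite ler_nat; lia.
  - by move: h2; rewrite -(ler_nat R) !(natrD, natrM) expr2.
pose P k := (6 * n <= k ^ 2 + (2 * r + 3) * k + 6)%N.
have Pr : P r by rewrite /P; nia.
have [b Pb minb] := ex_minnP (ex_intro P r Pr).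
have br : (b <= r)%N := minb r Pr.
case: b Pb minb br => [|c] Pb minb br.
  exfalso; move: Pb; rewrite /P /= => Pb.
  have : (6 * n <= 6)%N by lia.
  rewrite -(ler_nat R) natrM => h.
  have : (6 : R) <= r%:R by rewrite ler_nat.
  nra.
have nPc : (c ^ 2 + (2 * r + 3) * c + 6 < 6 * n)%N.
  by rewrite ltnNge; apply/negP => Pc; have := minb c Pc; rewrite ltnn.
set b := c.+1.
have Pbr : 6 * (n%:R : R) <= (b%:R) ^+ 2 + (2 * r%:R + 3) * b%:R + 6.
  by move: Pb; rewrite /P -(ler_nat R) !(natrD, natrM) expr2.
have nPcr : ((b%:R : R) - 1) ^+ 2 + (2 * r%:R + 3) * (b%:R - 1) + 6 < 6 * n%:R.
  by move: nPc; rewrite -(ltr_nat R) !(natrD, natrM) expr2 /b -(@natr1 R c) addrK.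
have b1 : (1 : R) <= b%:R by rewrite ler1n.
have brr : (b%:R : R) <= r%:R by rewrite ler_nat.
have r6r : (6 : R) <= r%:R by rewrite ler_nat.
have hb : (b * r + 2 * b + 3 <= 3 * n)%N.
  rewrite -(ler_nat R) !(natrD, natrM).
  have := Rb _ _ _ _ _ s0 sr (le_trans (ler_nat R 4 6) r6r) b1 brr H2 nPcr; lra.
have b5 : (5 <= b)%N.
  rewrite leqNgt; apply/negP => b4.
  apply: (Rb5 _ _ _ _ _ s0 sr r6r H2 Pbr) => //.
  by rewrite (_ : (4 : R) = 4%:R) // ler_nat; lia.
have ha : (2 * n <= b * r + b + 2)%N.
  have hbb : (b * b <= b * r)%N by rewrite leq_mul2l br orbT.
  move: Pb; rewrite /P -mulnn -/b; lia.
pose t := (b * r + b + 2 - 2 * n)%N.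
pose p := (3 * n - 3 - 2 * b - b * r)%N.
have et : (t + 2 * n = b * r + b + 2)%N by rewrite /t; lia.
have ep : (p + 3 + 2 * b + b * r = 3 * n)%N by rewrite /p; lia.
have hp : (p <= 'C(b, 2))%N.
  have e1 : (b * b.-1 + b = b * b)%N by rewrite -mulnSr.
  have := bin2E b; move: Pb; rewrite /P -mulnn -/b => Pb; lia.
have ht : (t <= 'C(b, 3))%N.
  suff : (6 * t <= b * b.-1 * b.-2)%N by rewrite -bin3E; lia.
  have b5r : (5 : R) <= b%:R by rewrite (ler_nat R 5 b).
  have hR := Rd _ _ _ _ _ s0 sr b5r H2.
  have etR : (t%:R : R) + 2 * n%:R = b%:R * r%:R + b%:R + 2.
    by move/(congr1 (fun x : nat => (x%:R : R))): et; rewrite /= !(natrD, natrM).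
  have [d ed] : exists d, b = d.+2 by exists b.-2; lia.
  have ebR : (b%:R : R) = d%:R + 2 by rewrite ed -addn2 natrD.
  rewrite ed /= -(ler_nat R) !natrM -[d.+2]addn2 -[d.+1]addn1 !natrD.
  rewrite ebR in hR etR; lra.
have [B0 [isB0 cB0]] : exists B : {set {set 'I_n}}, is_base r B /\ (#|B| <= b)%N.
  by apply: (upper n r b p t hp ht); lia.
have lowB (B : {set {set 'I_n}}) : is_base r B -> (b <= #|B|)%N.
  by move=> HB; apply: minb; have := lower n r B HB.
have bs : base_size n r = b.
  apply/eqP; rewrite eqn_leq; apply/andP; split.
    apply: leq_trans cB0; apply: bigmin_le => //; exact: mem_index_enum.
  rewrite /base_size; elim/big_ind: _ => //.
  - apply: leq_trans (lowB B0 isB0) _; apply: leq_trans (max_card _) _.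
    exact: (leq_card (@set1 _) (@set1_inj _)).
  - by move=> x y hx hy; rewrite leq_min hx hy.
by rewrite bs (ceil_b R n r c Pb nPc).
Qed.
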